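(* Let $H$ and $J$ be finite graphs, let $S\subseteq V(H)$ and $T\subseteq V(J)$ with $|S| = |T|$, and let $f : S\to T$ be a bijection. Let $H\circ_f J$ denote the graph obtained from the disjoint union of $H$ and $J$ by identifying each vertex $x\in S$ with the vertex $f(x)\in T$ (the identified vertex being regarded as $x$), so that $V(H\circ_f J) = V(H)\cup (V(J)\setminus T)$ and $E(H\circ_f J) = E(H)\cup E(J)$ (edges of $J$ incident with $T$ being transferred to the corresponding vertices of $S$). If $S$ is a decycling set of $H$ and $T$ is a decycling set of $J$, then $S$ is a decycling set of $H\circ_f J$. Moreover, if $S$ is a minimum decycling set of $H$ and $T$ is a minimum decycling set of $J$, then $S$ is a minimum decycling set of $H\circ_f J$.
   Context: For a graph $G$, a set $S\subseteq V(G)$ is a decycling set of $G$ if $G - S$ is acyclic (a forest). The decycling number $\nabla(G)$ is the smallest size of a decycling set of $G$, and a decycling set of this size is a minimum decycling set. *)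

(* Defs.v *)
From mathcomp Require Import all_boot.
Set Implicit Arguments. Unset Strict Implicit. Unset Printing Implicit Defensive.

Definition simple_graph (V : finType) (e : rel V) : Prop :=
  symmetric e /\ irreflexive e.

Definition is_cycle (V : finType) (e : rel V) (c : seq V) : Prop :=
  (3 <= size c) /\ ucycle e c.

(* G - S is acyclic (a forest): every cycle of G meets S. *)
Definition decycling (V : finType) (e : rel V) (S : {set V}) : Prop :=
  forall c : seq V, is_cycle e c -> has (fun v => v \in S) c.

Definition min_decycling (V : finType) (e : rel V) (S : {set V}) : Prop :=
  decycling e S /\ forall X : {set V}, decycling e X -> #|S| <= #|X|.

Section Glue.
Variables (VH VJ : finType) (eH : rel VH) (eJ : rel VJ)
          (S : {set VH}) (T : {set VJ}) (f : VH -> VJ).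

Definition glue_keep (x : VH + VJ) : bool :=
  match x with inl _ => true | inr y => y \notin T end.

Definition glue_vert : finType := {x : VH + VJ | glue_keep x}.

Definition glue_inH (x : VH) : glue_vert := @exist _ glue_keep (inl x) isT.

(* [glue_rep y u] : the vertex y of J is represented by the vertex u of the
   glued graph (y in T is represented by the x in S with f x = y). *)
Definition glue_rep (y : VJ) (u : glue_vert) : bool :=
  match sval u with
  | inl x => (x \in S) && (f x == y)
  | inr y' => y' == y
  end.

(* E(H o_f J) = E(H) u E(J), edges of J transferred along f^-1 on T. *)
Definition glue_edge : rel glue_vert := fun u v =>
  (match sval u, sval v with inl a, inl b => eH a b | _, _ => false end)
  || [exists y, exists z, [&& eJ y z, glue_rep y u & glue_rep z v]].

Definition glue_S : {set glue_vert} := glue_inH @: S.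

End Glue.

Arguments glue_vert VH VJ T : clear implicits.
Arguments glue_rep {VH VJ} S T f y u.
Arguments glue_edge {VH VJ} eH eJ S T f u v.
Arguments glue_S {VH VJ} S T.

(* Main.v *)
Require Import Defs.
From mathcomp Require Import all_boot.

Lemma cyc_transfer (U V : finType) (e : rel U) (e' : rel V) (P : pred U)
  (p : U -> V) (A : pred U) (D : {set V}) (c : seq U) :
  decycling e' D -> is_cycle e c -> all P c -> {in P &, injective p} ->
  {in P &, forall u v, e u v -> e' (p u) (p v)} ->
  {in P, forall u, p u \in D -> A u} -> has A c.
Proof.
move=> dD [sz /andP[cy uq]] aP pinj pe pA.
have /dD : is_cycle e' (map p c).
  split; first by rewrite size_map.
  apply/andP; split.
    rewrite cycle_map; apply: (sub_in_cycle _ aP cy) => u v uP vP /=.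
    exact: pe.
  rewrite map_inj_in_uniq // => u v uc vc; apply: pinj.
    exact: (allP aP). exact: (allP aP).
rewrite has_map => /hasP[u uc /= uD]; apply/hasP; exists u => //.
by apply: pA => //; exact: (allP aP).
Qed.

Theorem mainTheorem1 (VH VJ : finType) (eH : rel VH) (eJ : rel VJ)
    (S : {set VH}) (T : {set VJ}) (f : VH -> VJ) :
  simple_graph eH -> simple_graph eJ ->
  {in S &, injective f} -> f @: S = T ->
  (decycling eH S -> decycling eJ T ->
     decycling (glue_edge eH eJ S T f) (glue_S S T)) /\
  (min_decycling eH S -> min_decycling eJ T ->
     min_decycling (glue_edge eH eJ S T f) (glue_S S T)).
Proof.
move=> _ _ _ _.
set G := glue_vert VH VJ T.
set e := glue_edge eH eJ S T f.
have injH : injective (@glue_inH VH VJ T) by move=> a b /(congr1 val) [].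
have glH : forall a (ka : glue_keep T (inl a)), exist _ (inl a) ka = glue_inH T a :> G.
  by move=> a ka; apply: val_inj.
have eHe : forall a b, eH a b -> e (glue_inH T a) (glue_inH T b).
  by move=> a b ab; rewrite /e /glue_edge /= ab.
have inS : forall a, (glue_inH T a \in glue_S S T) = (a \in S).
  by move=> a; rewrite /glue_S mem_imset.
pose isl (u : G) := if sval u is inl _ then true else false.
have side : forall u v : G, e u v -> u \notin glue_S S T -> v \notin glue_S S T ->
    isl u = isl v.
  move=> [[a|y] ku] [[b|z] kv] //=.
  - rewrite /e /glue_edge /= => /existsP[y0 /existsP[z0 /and3P[_ r _]]].
    move: r; rewrite /glue_rep /= => /andP[aS _].
    by rewrite glH inS aS.
  - rewrite /e /glue_edge /= => /existsP[y0 /existsP[z0 /and3P[_ _ r]]] _.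
    move: r; rewrite /glue_rep /= => /andP[bS _].
    by rewrite glH inS bS.
have pth : forall s (u : G), path e u s -> all (fun v => v \notin glue_S S T) (u :: s) ->
    all (fun v => isl v == isl u) s.
  elim=> [|v s IH] u //= /andP[uv pv] /and3P[uN vN aN].
  rewrite -(side _ _ uv uN vN) eqxx /=.
  by rewrite (side _ _ uv uN vN); apply: IH => //=; rewrite vN.
have P1 : decycling eH S -> decycling eJ T -> decycling e (glue_S S T).
  move=> dH dJ c cc; apply/negPn/negP => hc.
  have aN : all (fun v => v \notin glue_S S T) c by rewrite all_predC.
  case: c cc hc aN => [[//]|u c0] cc hc aN.
  have pu : path e u c0.
    by case: cc => _ /andP[/= + _]; rewrite rcons_path => /andP[].
  have sd := pth _ _ pu aN.
  have aside : all (fun v => isl v == isl u) (u :: c0) by rewrite /= eqxx.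
  move: hc; apply/negP/negPn.
  case: u cc aN pu sd aside => [[a|y] ku] cc aN pu sd aside.
  - pose p (v : G) := if sval v is inl x then x else a.
    apply: (@cyc_transfer _ _ _ _ (fun v => isl v && (v \notin glue_S S T)) (p) _ _ _ dH cc).
    + by rewrite all_predI; apply/andP; split => //; apply: sub_all aside => v /eqP ->.
    + move=> [[x|y] kx] [[x'|y'] kx'] //= _ _ eqx; apply: val_inj => /=.
      by rewrite /p /= in eqx; rewrite eqx.
    + move=> [[x|y] kx] [[x'|y'] kx'] //=; move=> /andP[_ xN] /andP[_ x'N].
      rewrite /e /glue_edge /= => /orP[//|/existsP[y0 /existsP[z0 /and3P[_ r _]]]].
      move: r; rewrite /glue_rep /= => /andP[xS _].
      by move: xN; rewrite glH inS xS.
    + by move=> [[x|y] kx] //= _ xS; rewrite glH inS.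
  - pose p (v : G) := if sval v is inr z then z else y.
    apply: (@cyc_transfer _ _ _ _ (fun v => ~~ isl v && (v \notin glue_S S T)) (p) _ _ _ dJ cc).
    + by rewrite all_predI; apply/andP; split => //; apply: sub_all aside => v /eqP ->.
    + move=> [[x|z] kx] [[x'|z'] kx'] //= _ _ eqx; apply: val_inj => /=.
      by rewrite /p /= in eqx; rewrite eqx.
    + move=> [[x|z] kx] [[x'|z'] kx'] //= _ _.
      rewrite /e /glue_edge /= => /existsP[y0 /existsP[z0 /and3P[ee r r']]].
      by move: ee r r'; rewrite /glue_rep /p /= => ee /eqP zy /eqP zz; subst y0 z0.
    + move=> [[x|z] kx] //= _ zT; exfalso; move: (kx) => /= /negP; apply; exact: zT.
split=> // [[dS mS] [dT mT]]; split; first exact: P1.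
move=> X dX.
rewrite /glue_S card_imset //.
pose Xh := [set x | glue_inH T x \in X].
have dXh : decycling eH Xh.
  move=> c cc.
  apply: (@cyc_transfer _ _ _ _ (predT) (glue_inH T) _ _ _ dX cc).
  + exact: all_predT.
  + by move=> x y _ _; apply: injH.
  + by move=> x y _ _; apply: eHe.
  + by move=> x _; rewrite inE.
apply: (leq_trans (mS _ dXh)).
rewrite -(card_imset _ injH); apply: subset_leq_card.
by apply/subsetP => u /imsetP[x]; rewrite inE => xX ->.
Qed.
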